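(* Consider the two-level PFASST iteration for a linear problem with Gauss–Radau nodes and $L$ time steps as described in the context. Then PFASST converges if the CFL number $\mu$ is small enough. More precisely, there exist a fixed value $\mu^*_0>0$ and a constant $c>0$ independent of $\mu$ such that for all $0<\mu<\mu^*_0$, $$\rho\big(\mathbf{T}_{\mathrm{PFASST}}(\mu)\big)\le c\,\mu^{1/L},$$ where $\rho$ denotes the spectral radius.
   Context: Fix positive integers $L$ (time steps), $M$ (collocation nodes), $N$ (spatial degrees of freedom). Let $0<\tau_1<\dots<\tau_M=1$ be the (right) Gauss–Radau nodes on $[0,1]$, $\ell_j$ the Lagrange basis polynomials, $\mathbf{Q}=(q_{m,j})\in\mathbb{R}^{M\times M}$ with $q_{m,j}=\int_0^{\tau_m}\ell_j(s)\,ds$. Let $\mathbf{Q}_\Delta\in\mathbb{R}^{M\times M}$ be the lower-triangular weight matrix of a simpler quadrature rule. Let $\mathbf{A}\in\mathbb{C}^{N\times N}$ and $\mu>0$. Let $\mathbf{N}_M\in\mathbb{R}^{M\times M}$ have ones in its last column and zeros elsewhere, $\mathbf{H}=\mathbf{N}_M\otimes\mathbf{I}_N$, and $\mathbf{E}\in\mathbb{R}^{L\times L}$ with ones on the first subdiagonal and zeros elsewhere. Composite collocation matrix: $\mathbf{C}=\mathbf{I}_{LMN}-\mu\,\mathbf{I}_L\otimes\mathbf{Q}\otimes\mathbf{A}-\mathbf{E}\otimes\mathbf{H}$. Fine preconditioner: $\hat{\mathbf{P}}=\mathbf{I}_{LMN}-\mu\,\mathbf{I}_L\otimes\mathbf{Q}_\Delta\otimes\mathbf{A}$.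 Coarse level: integers $\tilde M\le M$, $\tilde N\le N$, $\tilde{\mathbf{Q}}_\Delta\in\mathbb{R}^{\tilde M\times\tilde M}$ lower triangular (simpler quadrature rule on the $\tilde M$ coarse Gauss–Radau nodes), $\tilde{\mathbf{A}}\in\mathbb{C}^{\tilde N\times\tilde N}$, $\tilde{\mathbf{N}}_{\tilde M}\in\mathbb{R}^{\tilde M\times\tilde M}$ with ones in its last column and zeros elsewhere, $\tilde{\mathbf{H}}=\tilde{\mathbf{N}}_{\tilde M}\otimes\mathbf{I}_{\tilde N}$, and coarse approximative block Gauss–Seidel preconditioner $\tilde{\mathbf{P}}=\mathbf{I}_{L\tilde M\tilde N}-\mu\,\mathbf{I}_L\otimes\tilde{\mathbf{Q}}_\Delta\otimes\tilde{\mathbf{A}}-\mathbf{E}\otimes\tilde{\mathbf{H}}$. Both $\hat{\mathbf{P}}$ and $\tilde{\mathbf{P}}$ are assumed invertible. Restriction and interpolation are $\mathbf{T}_F^C=\mathbf{I}_L\otimes\mathbf{T}_{F,Q}^C\otimes\mathbf{T}_{F,A}^C\in\mathbb{R}^{L\tilde M\tilde N\times LMN}$ and $\mathbf{T}_C^F=\mathbf{I}_L\otimes\mathbf{T}_{C,Q}^F\otimes\mathbf{T}_{C,A}^F\in\mathbb{R}^{LMN\times L\tilde M\tilde N}$ (no coarsening across time steps), where the restriction satisfies $(\mathbf{E}\otimes\tilde{\mathbf{H}})\mathbf{T}_F^C=\mathbf{T}_F^C(\mathbf{E}\otimes\mathbf{H})$. Smoother iteration matrix $\mathbf{T}_S(\mu)=\mathbf{I}_{LMN}-\hat{\mathbf{P}}^{-1}\mathbf{C}$,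 coarse-grid correction $\mathbf{T}_{\mathrm{CGC}}(\mu)=\mathbf{I}_{LMN}-\mathbf{T}_C^F\tilde{\mathbf{P}}^{-1}\mathbf{T}_F^C\mathbf{C}$, and PFASST iteration matrix $\mathbf{T}_{\mathrm{PFASST}}(\mu)=\mathbf{T}_S(\mu)\,\mathbf{T}_{\mathrm{CGC}}(\mu)$. *)

(* Defs.v *)
From HB Require Import structures.
From mathcomp Require Import all_boot all_order all_algebra.
From mathcomp Require Import all_classical all_reals all_analysis.
From mathcomp Require Import complex mxtens.
Set Implicit Arguments. Unset Strict Implicit. Unset Printing Implicit Defensive.
Import Order.TTheory GRing.Theory Num.Theory.
Local Open Scope ring_scope.

(* Right Gauss--Radau nodes on [0,1]: 0 < tau_1 < ... < tau_M = 1, and the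
   interpolatory quadrature on these nodes is exact for all polynomials of
   degree <= 2M-2 (integral of t^k over [0,1] is 1/(k+1)). *)
Definition right_radau (R : realType) (M : nat) (tau : 'I_M -> R) : Prop :=
  [/\ (forall i j : 'I_M, (i < j)%N -> tau i < tau j),
      (forall i : 'I_M, 0 < tau i /\ tau i <= 1),
      (exists i : 'I_M, tau i = 1) &
      exists w : 'I_M -> R, forall k : nat, (k <= 2 * M - 2)%N ->
        \sum_(j < M) w j * tau j ^+ k = (k.+1%:R)^-1 ].

Definition lagrange (R : fieldType) (M : nat) (tau : 'I_M -> R) (j : 'I_M)
  : {poly R} :=
  \prod_(k < M | k != j) (('X - (tau k)%:P) * ((tau j - tau k)^-1)%:P).

Definition poly_int0 (R : fieldType) (p : {poly R}) (x : R) : R :=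
  \sum_(i < size p) p`_i * x ^+ i.+1 / (i.+1)%:R.

Definition collocQ (R : fieldType) (M : nat) (tau : 'I_M -> R) : 'M[R]_M :=
  \matrix_(m < M, j < M) poly_int0 (lagrange tau j) (tau m).

Definition rmx (R : rcfType) (m n : nat) (X : 'M[R]_(m, n)) : 'M[R[i]]_(m, n) :=
  map_mx (real_complex R) X.

Definition shiftE (R : rcfType) (L : nat) : 'M[R[i]]_L :=
  \matrix_(i < L, j < L) ((i == j.+1 :> nat)%:R).

Definition lastcol (R : rcfType) (M : nat) : 'M[R[i]]_M :=
  \matrix_(i < M, j < M) ((j == M.-1 :> nat)%:R).

Definition Hmat (R : rcfType) (M N : nat) : 'M[R[i]]_(M * N) :=
  lastcol R M *t (1%:M : 'M[R[i]]_N).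

(* E (x) H, viewed with the index ordering (L*M)*N *)
Definition EH (R : rcfType) (L M N : nat) : 'M[R[i]]_(L * M * N) :=
  castmx (mulnA L M N, mulnA L M N) (shiftE R L *t Hmat R M N).

Definition kronI (R : rcfType) (L m n p q : nat)
  (X : 'M[R[i]]_(m, n)) (Y : 'M[R[i]]_(p, q)) : 'M[R[i]]_(L * m * p, L * n * q) :=
  ((1%:M : 'M[R[i]]_L) *t X) *t Y.

Definition Ccoll (R : realType) (L M N : nat) (tau : 'I_M -> R) (A : 'M[R[i]]_N)
  (mu : R) : 'M[R[i]]_(L * M * N) :=
  1%:M - (real_complex R mu) *: kronI L (rmx (collocQ tau)) A - EH R L M N.

Definition Phat (R : realType) (L M N : nat) (QD : 'M[R]_M) (A : 'M[R[i]]_N)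
  (mu : R) : 'M[R[i]]_(L * M * N) :=
  1%:M - (real_complex R mu) *: kronI L (rmx QD) A.

Definition Ptil (R : realType) (L Mt Nt : nat) (QDt : 'M[R]_Mt) (At : 'M[R[i]]_Nt)
  (mu : R) : 'M[R[i]]_(L * Mt * Nt) :=
  1%:M - (real_complex R mu) *: kronI L (rmx QDt) At - EH R L Mt Nt.

Definition TFC (R : realType) (L M N Mt Nt : nat)
  (TQ : 'M[R]_(Mt, M)) (TA : 'M[R]_(Nt, N)) : 'M[R[i]]_(L * Mt * Nt, L * M * N) :=
  kronI L (rmx TQ) (rmx TA).

Definition TCF (R : realType) (L M N Mt Nt : nat)
  (TQ : 'M[R]_(M, Mt)) (TA : 'M[R]_(N, Nt)) : 'M[R[i]]_(L * M * N, L * Mt * Nt) :=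
  kronI L (rmx TQ) (rmx TA).

Definition TPFASST (R : realType) (L M N Mt Nt : nat) (tau : 'I_M -> R)
  (QD : 'M[R]_M) (A : 'M[R[i]]_N) (QDt : 'M[R]_Mt) (At : 'M[R[i]]_Nt)
  (TQfc : 'M[R]_(Mt, M)) (TAfc : 'M[R]_(Nt, N))
  (TQcf : 'M[R]_(M, Mt)) (TAcf : 'M[R]_(N, Nt)) (mu : R) : 'M[R[i]]_(L * M * N) :=
  let C := Ccoll L tau A mu in
  let TS := 1%:M - invmx (Phat L QD A mu) *m C in
  let TCGC := 1%:M - TCF L TQcf TAcf *m invmx (Ptil L QDt At mu)
                       *m TFC L TQfc TAfc *m C in
  TS *m TCGC.

Definition spectral_radius (R : realType) (n : nat) (T : 'M[R[i]]_n) : R :=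
  sup [set Normc.normc l | l in [set l | eigenvalue T l]]%classic.

(* Main.v *)
Require Import Defs.
From HB Require Import structures.
From mathcomp Require Import all_boot all_order all_algebra.
From mathcomp Require Import all_classical all_reals all_analysis.
From mathcomp Require Import complex mxtens.
From mathcomp Require Import ring lra zify.
Set Implicit Arguments. Unset Strict Implicit. Unset Printing Implicit Defensive.
Import Order.TTheory GRing.Theory Num.Theory.
Local Open Scope ring_scope.
Section Norms.
Variable R : realType.
Local Notation C := R[i].

Definition nm (z : C) : R := Normc.normc z.

Lemma nmE (z : C) : `|z| = real_complex R (nm z).
Proof. reflexivity. Qed.

Lemma nm_ge0 z : 0 <= nm z.
Proof. by have := normr_ge0 z; rewrite nmE lecR. Qed.

Lemma nmD x y : nm (x + y) <= nm x + nm y.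
Proof. by have := ler_normD x y; rewrite !nmE -rmorphD lecR. Qed.

Lemma nmM x y : nm (x * y) = nm x * nm y.
Proof. by have := normrM x y; rewrite !nmE -rmorphM => /complexI. Qed.

Lemma nmN x : nm (- x) = nm x.
Proof. by have := normrN x; rewrite !nmE => /complexI. Qed.

Lemma nm0 : nm 0 = 0.
Proof. by have := normr0 C; rewrite !nmE -(rmorph0 (real_complex R)) => /complexI. Qed.

Lemma nm_eq0 x : nm x = 0 -> x = 0.
Proof. by move=> h; apply/eqP; rewrite -normr_eq0 nmE h rmorph0. Qed.

Lemma nm_real (r : R) : nm (real_complex R r) = `|r|.
Proof.
have := normc_def (real_complex R r); rewrite nmE /= expr0n /= addr0 sqrtr_sqr.
by move/complexI.
Qed.

Lemma nm1 : nm 1 = 1.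
Proof. by have := nm_real 1; rewrite normr1. Qed.

Lemma nm_sum I (r : seq I) (P : pred I) (F : I -> C) :
  nm (\sum_(i <- r | P i) F i) <= \sum_(i <- r | P i) nm (F i).
Proof.
elim/big_rec2: _; first by rewrite nm0.
move=> i y1 y2 _ h; apply: le_trans (nmD _ _) _; exact: lerD.
Qed.

Definition mn m n (X : 'M[C]_(m, n)) : R := \sum_i \sum_j nm (X i j).

Lemma mn_ge0 m n (X : 'M[C]_(m, n)) : 0 <= mn X.
Proof. by apply: sumr_ge0 => i _; apply: sumr_ge0 => j _; apply: nm_ge0. Qed.

Lemma mnD m n (X Y : 'M[C]_(m, n)) : mn (X + Y) <= mn X + mn Y.
Proof.
rewrite /mn -big_split /=; apply: ler_sum => i _.
rewrite -big_split /=; apply: ler_sum => j _; rewrite mxE; exact: nmD.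
Qed.

Lemma mnN m n (X : 'M[C]_(m, n)) : mn (- X) = mn X.
Proof. by apply: eq_bigr => i _; apply: eq_bigr => j _; rewrite mxE nmN. Qed.

Lemma mnB m n (X Y : 'M[C]_(m, n)) : mn (X - Y) <= mn X + mn Y.
Proof. by apply: le_trans (mnD _ _) _; rewrite mnN. Qed.

Lemma mnZ m n a (X : 'M[C]_(m, n)) : mn (a *: X) = nm a * mn X.
Proof.
rewrite /mn mulr_sumr; apply: eq_bigr => i _; rewrite mulr_sumr.
by apply: eq_bigr => j _; rewrite mxE nmM.
Qed.

Lemma mn_row m n (X : 'M[C]_(m, n)) i : \sum_j nm (X i j) <= mn X.
Proof.
rewrite /mn (bigD1 i) //= lerDl; apply: sumr_ge0 => k _.
by apply: sumr_ge0 => j _; apply: nm_ge0.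
Qed.

Lemma mn_mul m n p (X : 'M[C]_(m, n)) (Y : 'M[C]_(n, p)) :
  mn (X *m Y) <= mn X * mn Y.
Proof.
rewrite /mn mulr_suml; apply: ler_sum => i _.
apply: (@le_trans _ _ (\sum_j \sum_l nm (X i l) * nm (Y l j))).
  apply: ler_sum => j _; rewrite mxE; apply: le_trans (nm_sum _ _ _) _.
  by apply: ler_sum => l _; rewrite nmM.
rewrite exchange_big /= mulr_suml; apply: ler_sum => l _.
rewrite -mulr_sumr; apply: ler_wpM2l; first exact: nm_ge0.
exact: mn_row.
Qed.

Lemma mn_eq0 m n (X : 'M[C]_(m, n)) : mn X = 0 -> X = 0.
Proof.
move=> h; apply/matrixP => i j; rewrite mxE; apply: nm_eq0.
apply/eqP; rewrite eq_le nm_ge0 andbT -h.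
apply: le_trans (mn_row X i); rewrite (bigD1 j) //= lerDl.
by apply: sumr_ge0 => k _; apply: nm_ge0.
Qed.

End Norms.
Section Grad.
Variable F : pzRingType.

Definition lowb m n (gm gn : nat -> nat) (k : nat) (X : 'M[F]_(m, n)) :=
  forall (i : 'I_m) (j : 'I_n), X i j != 0 -> (gn j + k <= gm i)%N.

Lemma lowb_mul m n p (g1 g2 g3 : nat -> nat) k1 k2
  (X : 'M[F]_(m, n)) (Y : 'M[F]_(n, p)) :
  lowb g1 g2 k1 X -> lowb g2 g3 k2 Y -> lowb g1 g3 (k1 + k2) (X *m Y).
Proof.
move=> hX hY i j; rewrite mxE => hs.
have [l hl] : exists l, X i l * Y l j != 0.
  apply/existsP; apply: contraNT hs; rewrite negb_exists => /forallP h.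
  by apply/eqP/big1 => l _; apply/eqP; have := h l; rewrite negbK.
have hx : X i l != 0 by apply: contraNneq hl => ->; rewrite mul0r.
have hy : Y l j != 0 by apply: contraNneq hl => ->; rewrite mulr0.
have := hX _ _ hx; have := hY _ _ hy; lia.
Qed.

Lemma lowbD m n (g1 g2 : nat -> nat) k (X Y : 'M[F]_(m, n)) :
  lowb g1 g2 k X -> lowb g1 g2 k Y -> lowb g1 g2 k (X + Y).
Proof.
move=> hX hY i j; rewrite mxE => h.
case: (eqVneq (X i j) 0) => [e|]; last exact: hX.
by apply: hY; rewrite e add0r in h.
Qed.

Lemma lowbN m n (g1 g2 : nat -> nat) k (X : 'M[F]_(m, n)) :
  lowb g1 g2 k X -> lowb g1 g2 k (- X).
Proof. by move=> hX i j; rewrite mxE oppr_eq0; apply: hX. Qed.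

Lemma lowbB m n (g1 g2 : nat -> nat) k (X Y : 'M[F]_(m, n)) :
  lowb g1 g2 k X -> lowb g1 g2 k Y -> lowb g1 g2 k (X - Y).
Proof. by move=> hX hY; apply: lowbD => //; apply: lowbN. Qed.

Lemma lowb1 n (g : nat -> nat) : lowb g g 0 (1%:M : 'M[F]_n).
Proof.
move=> i j; rewrite mxE; case: (eqVneq i j) => [->|]; first by rewrite addn0.
by rewrite mulr0n eqxx.
Qed.

Lemma lowb_nil n (g : nat -> nat) k (X : 'M[F]_n) :
  lowb g g k X -> (forall i : 'I_n, (g i < k)%N) -> X = 0.
Proof.
move=> hX hg; apply/matrixP => i j; rewrite mxE; apply/eqP; apply: contraT => h.
have := hX _ _ h; have := hg i; lia.
Qed.

Definition mpow n (X : 'M[F]_n) k := iter k (fun Y => Y *m X) 1%:M.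

Lemma mpowS n (X : 'M[F]_n) k : mpow X k.+1 = mpow X k *m X.
Proof. by []. Qed.

Lemma mpowSl n (X : 'M[F]_n) k : mpow X k.+1 = X *m mpow X k.
Proof.
elim: k => [|k IH]; first by rewrite mpowS /mpow /= mul1mx mulmx1.
by rewrite [LHS]mpowS [in LHS]IH -mulmxA.
Qed.

Lemma lowb_pow n (g : nat -> nat) (X : 'M[F]_n) k :
  lowb g g 1 X -> lowb g g k (mpow X k).
Proof.
move=> hX; elim: k => [|k IH]; first exact: lowb1.
by rewrite mpowS; have := lowb_mul IH hX; rewrite addn1.
Qed.

Lemma geom_tel n (E : 'M[F]_n) L :
  (1%:M - E) *m (\sum_(k < L) mpow E k) = 1%:M - mpow E L.
Proof.
elim: L => [|L IH]; first by rewrite big_ord0 mulmx0 /mpow /= subrr.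
rewrite big_ord_recr /= mulmxDr IH mulmxBl mul1mx -mpowSl.
by rewrite addrA subrK.
Qed.

Lemma geom_inv n (E : 'M[F]_n) L :
  mpow E L = 0 -> (1%:M - E) *m (\sum_(k < L) mpow E k) = 1%:M.
Proof. by move=> hL; rewrite geom_tel hL subr0. Qed.

End Grad.
Definition gr (m p : nat) (i : nat) := (i %/ p %/ m)%N.



Lemma lowb_kronI (R : rcfType) L m n p q (X : 'M[R[i]]_(m, n)) (Y : 'M[R[i]]_(p, q)) :
  lowb (gr m p) (gr n q) 0 (kronI L X Y).
Proof.
move=> i j; rewrite /kronI !mxE /=.
set b := (Ordinal _ == Ordinal _); case: (boolP b) => hb; last first.
  by rewrite /= mulr0n !mul0r eqxx.
move=> _; move/eqP: hb => e.
have /= e' := f_equal (@nat_of_ord _) e.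
by rewrite /gr e' addn0.
Qed.

Lemma lowb_EH (R : rcfType) L M N : lowb (gr M N) (gr M N) 1 (EH R L M N).
Proof.
move=> i j; rewrite /EH castmxE !mxE /=.
set b := (_ == _.+1); case: (boolP b) => hb; last first.
  by rewrite /= mulr0n !mul0r eqxx.
move=> _; move/eqP: hb => e.
by rewrite /gr -!divnMA (mulnC N M) e addn1.
Qed.

Lemma gr_lt L m p (i : 'I_(L * m * p)) : (0 < m)%N -> (0 < p)%N -> (gr m p i < L)%N.
Proof.
move=> hm hp; rewrite /gr -divnMA ltn_divLR ?muln_gt0 ?hm ?hp //.
by have := ltn_ord i; lia.
Qed.
Section Alg.
Variable R : realType.
Local Notation C := R[i].

Ltac mxring := apply/matrixP => ? ?; rewrite !mxE; ring.

Lemma inv_eq n (X K : 'M[C]_n) (mc : C) :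
  X *m (1%:M - mc *: K) = 1%:M -> X = 1%:M + mc *: (X *m K).
Proof.
rewrite mulmxBr mulmx1 -scalemxAr => h.
by rewrite -[in RHS]h; mxring.
Qed.

Lemma TS_eq n (X Kh Kc EHf : 'M[C]_n) (mc : C) :
  X *m (1%:M - mc *: Kh) = 1%:M ->
  1%:M - X *m (1%:M - mc *: Kc - EHf) =
  EHf + mc *: (X *m Kh *m EHf + X *m (Kc - Kh)).
Proof.
move=> h; have hX := inv_eq h.
have hXE : X *m EHf = EHf + mc *: (X *m Kh *m EHf).
  by rewrite [in LHS]hX mulmxDl mul1mx -scalemxAl.
rewrite !mulmxBr mulmx1 hXE -scalemxAr.
rewrite [X in 1%:M - (X - _ - _)]hX.
by mxring.
Qed.

Lemma TCGC_eq n m (Y Kt : 'M[C]_m) (Kc EHf : 'M[C]_n) (EHc : 'M[C]_m)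
  (G : 'M[C]_(n, m)) (Fm : 'M[C]_(m, n)) (mc : C) :
  Y *m (1%:M - mc *: Kt - EHc) = 1%:M ->
  EHc *m Fm = Fm *m EHf ->
  1%:M - G *m Y *m Fm *m (1%:M - mc *: Kc - EHf) =
  (1%:M - G *m Fm) - mc *: (G *m Y *m (Kt *m Fm - Fm *m Kc)).
Proof.
move=> hY hc.
have hFC : Fm *m (1%:M - mc *: Kc - EHf) =
    (1%:M - mc *: Kt - EHc) *m Fm + mc *: (Kt *m Fm - Fm *m Kc).
  rewrite !mulmxBr !mulmxBl mulmx1 mul1mx -hc -scalemxAr -scalemxAl.
  by mxring.
rewrite -!mulmxA hFC; set S := (Kt *m Fm - Fm *m Kc).
rewrite mulmxDr (mulmxA Y) hY mul1mx -scalemxAr mulmxDr -scalemxAr.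
idtac.
by mxring.
Qed.

Lemma T_eq n (EHf G0 U1 U2 : 'M[C]_n) (mc : C) :
  (EHf + mc *: U1) *m (G0 - mc *: U2) =
  EHf *m G0 + mc *: (U1 *m G0 - EHf *m U2 - mc *: (U1 *m U2)).
Proof.
rewrite mulmxDl !mulmxBr -!scalemxAl -!scalemxAr scalerA.
by mxring.
Qed.

End Alg.
Section Bounds.
Variable R : realType.
Local Notation C := R[i].

Lemma mn_mul_le m n p (X : 'M[C]_(m, n)) (Y : 'M[C]_(n, p)) x y :
  mn X <= x -> mn Y <= y -> mn (X *m Y) <= x * y.
Proof.
move=> hx hy; apply: le_trans (mn_mul X Y) _.
by apply: ler_pM => //; apply: mn_ge0.
Qed.

Lemma mnD_le m n (X Y : 'M[C]_(m, n)) x y :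
  mn X <= x -> mn Y <= y -> mn (X + Y) <= x + y.
Proof. by move=> hx hy; apply: le_trans (mnD X Y) _; apply: lerD. Qed.

Lemma mnB_le m n (X Y : 'M[C]_(m, n)) x y :
  mn X <= x -> mn Y <= y -> mn (X - Y) <= x + y.
Proof. by move=> hx hy; apply: le_trans (mnB X Y) _; apply: lerD. Qed.

Lemma mnZ_le m n a (X : 'M[C]_(m, n)) s x :
  nm a <= s -> mn X <= x -> mn (a *: X) <= s * x.
Proof.
by move=> hs hx; rewrite mnZ; apply: ler_pM => //; [apply: nm_ge0|apply: mn_ge0].
Qed.

Lemma nmX (x : C) k : nm (x ^+ k) = nm x ^+ k.
Proof. elim: k => [|k IH]; first by rewrite !expr0 nm1. by rewrite !exprS nmM IH. Qed.

Lemma mpow_bound n (N : 'M[C]_n) Q e0 :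
  mn N <= Q -> 0 <= Q -> mn (1%:M : 'M[C]_n) <= e0 ->
  forall k, mn (mpow N k) <= e0 * Q ^+ k.
Proof.
move=> hN hQ he; elim=> [|k IH]; first by rewrite expr0 mulr1.
by rewrite mpowS exprSr mulrA; apply: mn_mul_le.
Qed.

Lemma pow_pert n (N D : 'M[C]_n) Q d e0 :
  mn N <= Q -> mn (N + D) <= Q -> 1 <= Q -> mn D <= d ->
  mn (1%:M : 'M[C]_n) <= e0 ->
  forall k, mn (mpow (N + D) k - mpow N k) <= k%:R * d * e0 * Q ^+ k.
Proof.
move=> hN hND hQ hD he.
have Q0 : 0 <= Q by apply: le_trans hQ.
have d0 : 0 <= d by apply: le_trans hD; apply: mn_ge0.
have e00 : 0 <= e0 by apply: le_trans he; apply: mn_ge0.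
elim=> [|k IH]; first by rewrite /mpow /= subrr mul0r !mul0r /mn; under eq_bigr do under eq_bigr do rewrite mxE nm0; rewrite !big1.
have -> : mpow (N + D) k.+1 - mpow N k.+1 =
    (mpow (N + D) k - mpow N k) *m (N + D) + mpow N k *m D.
  rewrite !mpowS mulmxBl [mpow N k *m (N + D)]mulmxDr.
  set A1 := mpow (N + D) k *m (N + D); set A2 := mpow N k *m N; set A3 := mpow N k *m D.
  by apply/matrixP => i j; rewrite !mxE; ring.
have h1 := mn_mul_le IH hND.
have h2 := mn_mul_le (mpow_bound hN Q0 he k) hD.
apply: le_trans (mnD_le h1 h2) _.
have hP : 0 <= Q ^+ k by apply: exprn_ge0.
have hk : 0 <= k%:R :> R by apply: ler0n.
rewrite exprSr -natr1.
have : 0 <= e0 * Q ^+ k * d * (Q - 1).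
  by apply: mulr_ge0; [apply: mulr_ge0; [apply: mulr_ge0|]|]; rewrite ?subr_ge0.
nra.
Qed.

End Bounds.
Theorem theorem2 (R : realType) (L M N Mt Nt : nat) (tau : 'I_M -> R)
  (QD : 'M[R]_M) (A : 'M[R[i]]_N) (QDt : 'M[R]_Mt) (At : 'M[R[i]]_Nt)
  (TQfc : 'M[R]_(Mt, M)) (TAfc : 'M[R]_(Nt, N))
  (TQcf : 'M[R]_(M, Mt)) (TAcf : 'M[R]_(N, Nt)) :
  (0 < L)%N -> (0 < M)%N -> (0 < N)%N ->
  (0 < Mt)%N -> (Mt <= M)%N -> (0 < Nt)%N -> (Nt <= N)%N ->
  right_radau tau ->
  is_trig_mx QD -> is_trig_mx QDt ->
  EH R L Mt Nt *m TFC L TQfc TAfc = TFC L TQfc TAfc *m EH R L M N ->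
  exists mu0 c : R, 0 < mu0 /\ 0 < c /\
    forall mu : R, 0 < mu -> mu < mu0 ->
      Phat L QD A mu \in unitmx -> Ptil L QDt At mu \in unitmx ->
      spectral_radius
        (TPFASST L tau QD A QDt At TQfc TAfc TQcf TAcf mu)
        <= c * mu `^ (L%:R)^-1.
Proof.
move=> hL hM hN hMt _ hNt _ _ _ _ hcomm.
set Kh := kronI L (rmx QD) A.
set Kc := kronI L (rmx (collocQ tau)) A.
set Kt := kronI L (rmx QDt) At.
set EHf := EH R L M N.
set EHc := EH R L Mt Nt.
set Fm := TFC L TQfc TAfc.
set G := TCF L TQcf TAcf.
set G0 := 1%:M - G *m Fm.
set N0 := EHf *m G0.
set W := \sum_(k < L) mpow EHc k.
have hEHc0 : mpow EHc L = 0.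
  apply: (@lowb_nil _ _ (gr Mt Nt) L); first exact/lowb_pow/lowb_EH.
  by move=> i; apply: gr_lt.
have hW : (1%:M - EHc) *m W = 1%:M by apply: geom_inv.
have hG0 : lowb (gr M N) (gr M N) 0 G0.
  apply: lowbB; first exact: lowb1.
  have := lowb_mul (@lowb_kronI R L _ _ _ _ (rmx TQcf) (rmx TAcf)) (@lowb_kronI R L _ _ _ _ (rmx TQfc) (rmx TAfc)).
  by rewrite addn0.
have hN00 : mpow N0 L = 0.
  apply: (@lowb_nil _ _ (gr M N) L); last by move=> i; apply: gr_lt.
  apply: lowb_pow; have := lowb_mul (@lowb_EH R L M N) hG0; by rewrite addn0.
pose a := mn Kh; pose b := mn (Kt *m W); pose e := mn (1%:M : 'M[R[i]]_(L * M * N)).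
pose w := mn W; pose h := mn EHf; pose kc := mn Kc; pose kt := mn Kt.
pose f := mn Fm; pose g := mn G; pose g0 := mn G0; pose n0 := mn N0.
pose u1 := 2 * e * (a * h + (kc + a)).
pose u2 := g * (2 * w) * (kt * f + f * kc).
pose z := u1 * g0 + h * u2 + 1 * (u1 * u2).
pose Q := n0 + z + 1.
pose K := L%:R * z * e * Q ^+ L.
have a0 : 0 <= a by apply: mn_ge0.
have b0 : 0 <= b by apply: mn_ge0.
have e0 : 0 <= e by apply: mn_ge0.
have w0 : 0 <= w by apply: mn_ge0.
have h0 : 0 <= h by apply: mn_ge0.
have kc0 : 0 <= kc by apply: mn_ge0.
have kt0 : 0 <= kt by apply: mn_ge0.
have f0 : 0 <= f by apply: mn_ge0.
have g00 : 0 <= g by apply: mn_ge0.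
have g000 : 0 <= g0 by apply: mn_ge0.
have n00 : 0 <= n0 by apply: mn_ge0.
have two0 : (0 : R) <= 2 by apply: ler0n.
have two1 : (0 : R) < 2 by apply: ltr0Sn.
have u10 : 0 <= u1 := mulr_ge0 (mulr_ge0 two0 e0) (addr_ge0 (mulr_ge0 a0 h0) (addr_ge0 kc0 a0)).
have u20 : 0 <= u2 := mulr_ge0 (mulr_ge0 g00 (mulr_ge0 two0 w0)) (addr_ge0 (mulr_ge0 kt0 f0) (mulr_ge0 f0 kc0)).
have z0 : 0 <= z := addr_ge0 (addr_ge0 (mulr_ge0 u10 g000) (mulr_ge0 h0 u20)) (mulr_ge0 ler01 (mulr_ge0 u10 u20)).
have Q1 : 1 <= Q by rewrite /Q lerDr; exact: addr_ge0 n00 z0.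
have K0 : 0 <= K := mulr_ge0 (mulr_ge0 (mulr_ge0 (ler0n _ L) z0) e0) (exprn_ge0 L (le_trans ler01 Q1)).
have pos : 0 < 2 * (a + b + 1) := mulr_gt0 two1 (ltr_wpDl (addr_ge0 a0 b0) ltr01).
exists (2 * (a + b + 1))^-1, (K `^ (L%:R)^-1 + 1); split.
  by rewrite invr_gt0.
split; first by apply: ltr_wpDl; [apply: powR_ge0|exact: ltr01].
move=> mu mu0 hmu hPu hTu.
pose mc := real_complex R mu.
have hmc : nm mc = mu by rewrite nm_real ger0_norm // ltW.
have hmuab : mu * (2 * (a + b + 1)) < 1 by rewrite -ltr_pdivlMr // div1r.
have hma : 0 <= mu * a by apply: mulr_ge0; [exact: ltW|exact: a0].
have hmb : 0 <= mu * b by apply: mulr_ge0; [exact: ltW|exact: b0].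
have hmu1 : mu <= 1 by lra.
have hmua : mu * a <= 2^-1 by lra.
have hmub : mu * b <= 2^-1 by lra.
pose X := invmx (Phat L QD A mu).
pose Y := invmx (Ptil L QDt At mu).
have hX : X *m (1%:M - mc *: Kh) = 1%:M by apply: mulVmx.
have hY : Y *m (1%:M - mc *: Kt - EHc) = 1%:M by apply: mulVmx.
have hXb : mn X <= 2 * e.
  have hX' := inv_eq hX.
  have : mn X <= e + mu * (mn X * a).
    rewrite {1}hX'; apply: mnD_le; first exact: lexx.
    apply: mnZ_le; [rewrite hmc; exact: lexx|exact: mn_mul].
  have : 0 <= (2^-1 - mu * a) * mn X by apply: mulr_ge0; [rewrite subr_ge0|apply: mn_ge0].
  lra.
have hY' : Y = W + mc *: (Y *m (Kt *m W)).
  have h1 : Y *m (1%:M - EHc) = 1%:M + mc *: (Y *m Kt).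
    rewrite -[in RHS]hY !mulmxBr -scalemxAr; by apply/matrixP => ? ?; rewrite !mxE; ring.
  have := congr1 (mulmx^~ W) h1; rewrite -mulmxA hW mulmx1 mulmxDl mul1mx -scalemxAl -mulmxA.
  by [].
have hYb : mn Y <= 2 * w.
  have : mn Y <= w + mu * (mn Y * b).
    rewrite {1}hY'; apply: mnD_le; first exact: lexx.
    apply: mnZ_le; [rewrite hmc; exact: lexx|exact: mn_mul].
  have : 0 <= (2^-1 - mu * b) * mn Y by apply: mulr_ge0; [rewrite subr_ge0|apply: mn_ge0].
  lra.
pose U1 := X *m Kh *m EHf + X *m (Kc - Kh).
pose U2 := G *m Y *m (Kt *m Fm - Fm *m Kc).
pose Z := U1 *m G0 - EHf *m U2 - mc *: (U1 *m U2).
have hU1 : mn U1 <= u1.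
  rewrite /u1 mulrDr; apply: mnD_le.
    rewrite mulrA; exact: mn_mul_le (mn_mul_le hXb (lexx _)) (lexx _).
  exact: mn_mul_le hXb (mnB_le (lexx _) (lexx _)).
have hU2 : mn U2 <= u2.
  exact: mn_mul_le (mn_mul_le (lexx _) hYb) (mnB_le (mn_mul_le (lexx _) (lexx _)) (mn_mul_le (lexx _) (lexx _))).
have hZ : mn Z <= z.
  apply: mnB_le; first exact: mnB_le (mn_mul_le hU1 (lexx _)) (mn_mul_le (lexx _) hU2).
  apply: mnZ_le; [rewrite hmc; exact: hmu1|exact: mn_mul_le hU1 hU2].
have hT : TPFASST L tau QD A QDt At TQfc TAfc TQcf TAcf mu = N0 + mc *: Z.
  rewrite /TPFASST /Ccoll -/Kh -/Kc -/Kt -/EHf -/EHc -/Fm -/G -/X -/Y -/mc.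
  rewrite (TS_eq _ _ hX) (TCGC_eq _ _ hY hcomm) T_eq.
  by [].
have hD : mn (mc *: Z) <= mu * z by apply: mnZ_le hZ; rewrite hmc; exact: lexx.
have hN0Q : mn N0 <= Q by rewrite /Q -addrA lerDl; exact: addr_ge0 z0 ler01.
have hNDQ : mn (N0 + mc *: Z) <= Q.
  apply: le_trans (mnD_le (lexx _) hD) _; rewrite /Q -addrA lerD2l.
  have : 0 <= (1 - mu) * z by apply: mulr_ge0; rewrite ?subr_ge0.
  lra.
have hpow := pow_pert hN0Q hNDQ Q1 hD (lexx e) L.
rewrite hN00 subr0 in hpow.
have hTL : mn (mpow (N0 + mc *: Z) L) <= mu * K.
  apply: le_trans hpow _; rewrite /K le_eqVlt; apply/orP; left; apply/eqP; ring.
rewrite hT; set T := N0 + mc *: Z.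
have hLr : (L%:R : R) != 0 by rewrite pnatr_eq0 -lt0n.
have hev : forall l, eigenvalue T l -> Normc.normc l <= (K `^ (L%:R)^-1 + 1) * mu `^ (L%:R)^-1.
  move=> l /eigenvalueP [v hv vn0].
  have hvk : forall k, v *m mpow T k = l ^+ k *: v.
    elim=> [|k IH]; first by rewrite /mpow /= mulmx1 expr0 scale1r.
    by rewrite mpowS mulmxA IH -scalemxAl hv scalerA -exprSr.
  have hvpos : 0 < mn v.
    rewrite lt_def mn_ge0 andbT; apply: contraNneq vn0 => /mn_eq0 ->; by [].
  have hlL : nm l ^+ L <= mu * K.
    have := mn_mul v (mpow T L); rewrite hvk mnZ nmX => hle.
    have : mn v * nm l ^+ L <= mn v * (mu * K).
      rewrite mulrC; apply: le_trans hle _; apply: ler_wpM2l; first exact: mn_ge0.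
      exact: hTL.
    by rewrite ler_pM2l.
  have x0 : 0 <= nm l by apply: nm_ge0.
  have -> : Normc.normc l = (nm l ^+ L) `^ (L%:R)^-1.
    by rewrite -powR_mulrn // -powRrM mulfV // powRr1.
  apply: (@le_trans _ _ ((mu * K) `^ (L%:R)^-1)).
    apply: ge0_ler_powR => //; rewrite ?invr_ge0 ?ler0n // nnegrE.
      by apply: exprn_ge0.
    by apply: mulr_ge0 => //; apply: ltW.
  rewrite powRM //; last by apply: ltW.
  rewrite mulrC ler_wpM2r //; first by apply: powR_ge0.
  by rewrite lerDl.
have hc0 : 0 <= (K `^ (L%:R)^-1 + 1) * mu `^ (L%:R)^-1.
  by apply: mulr_ge0; [apply: addr_ge0 => //; apply: powR_ge0|apply: powR_ge0].
rewrite /spectral_radius.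
case: (pselect (exists l, eigenvalue T l)) => [[l0 hl0]|hne].
  apply: ge_sup; first by exists (Normc.normc l0); exists l0.
  by move=> _ [l hl <-]; apply: hev.
rewrite (_ : [set _ | l in _]%classic = set0) ?sup0 //.
apply/seteqP; split => // x [l hl _]; exfalso; apply: hne; by exists l.
Qed.
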